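(* If $m\ge 10$ is even and $m=3t+1$ for some positive integer $t$, then $\lambda(L_m)<\lambda(T_m)$.
   Context: $\lambda(\cdot)$ denotes the largest adjacency eigenvalue. For even $m$, $L_m$ is obtained from a 5-cycle $u_1u_2u_3u_4u_5$ by adding $\frac{m-6}{2}$ new vertices each adjacent exactly to $u_1$ and $u_3$, and one new vertex adjacent only to $u_1$ (equivalently, $K_{2,\frac{m-2}{2}}$ with one edge subdivided, with a pendant edge attached at a vertex of maximum degree). When $\frac{m-4}{3}$ is a positive integer, $T_m$ is obtained from $C_5$ by replacing two adjacent vertices by independent sets of sizes $\frac{m-4}{3}$ and $2$ (each new vertex adjacent to all vertices/sets that the replaced vertex was adjacent to, so the two sets span a complete bipartite graph). *)

(* Defs.v *)
From mathcomp Require Import all_boot all_order all_algebra.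
Set Implicit Arguments. Unset Strict Implicit. Unset Printing Implicit Defensive.
Import Order.TTheory GRing.Theory Num.Theory.
Local Open Scope ring_scope.

Definition adjmx (F : fieldType) (n : nat) (e : nat -> nat -> bool) : 'M[F]_n :=
  \matrix_(i < n, j < n) ((e i j || e j i : bool)%:R).

(* L_m, with k = (m-6)/2 extra vertices adjacent to u1,u3.
   Vertices: 0..4 = u1..u5 (5-cycle), 5..4+k = common neighbours of u1 and u3,
   5+k = pendant vertex at u1.  Total k+6 = m/2+3 vertices, m edges. *)
Definition L_edge (k : nat) (i j : nat) : bool :=
  [|| (i == 0%N) && (j == 1%N), (i == 1%N) && (j == 2%N), (i == 2%N) && (j == 3%N),
      (i == 3%N) && (j == 4%N), (i == 0%N) && (j == 4%N),
      [&& (i == 0%N) || (i == 2%N), (5 <= j)%N & (j < 5 + k)%N]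
    | (i == 0%N) && (j == 5 + k)%N ].

Definition L_nv (m : nat) : nat := (m./2 - 3 + 6)%N.
Definition L_adj (F : fieldType) (m : nat) : 'M[F]_(L_nv m) :=
  adjmx F (L_nv m) (L_edge (m./2 - 3)).

(* T_m, with a = (m-4)/3: C_5 = u1..u5 with u1 replaced by an independent set A
   of size a and u2 by an independent set B of size 2.
   Vertices: 0..a-1 = A, a, a+1 = B, a+2 = u3, a+3 = u4, a+4 = u5. *)
Definition T_edge (a : nat) (i j : nat) : bool :=
  [|| [&& (i < a)%N, (a <= j)%N & (j < a + 2)%N],
      [&& (a <= i)%N, (i < a + 2)%N & j == (a + 2)%N],
      (i == a + 2)%N && (j == a + 3)%N,
      (i == a + 3)%N && (j == a + 4)%N
    | (i < a)%N && (j == a + 4)%N ].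

Definition T_nv (m : nat) : nat := ((m - 4) %/ 3 + 5)%N.
Definition T_adj (F : fieldType) (m : nat) : 'M[F]_(T_nv m) :=
  adjmx F (T_nv m) (T_edge ((m - 4) %/ 3)).

Definition largest_eigenvalue (F : realFieldType) (n : nat) (A : 'M[F]_n) (mu : F) : Prop :=
  eigenvalue A mu /\ forall nu, eigenvalue A nu -> nu <= mu.

(* Main.v *)
Require Import Defs.
From mathcomp Require Import all_boot all_order all_algebra zify ring lra.
Import Order.TTheory GRing.Theory Num.Theory.
Local Open Scope ring_scope.
From mathcomp Require Import polyrcf.
Section Gen.
Variable R : fieldType.

Lemma rv_fun n (v : 'rV[R]_n) : exists g : nat -> R, forall i : 'I_n, v 0 i = g i.
Proof.
case: n v => [|n] v; first by exists (fun _ => 0) => -[].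
by exists (fun i => v 0 (inord i)) => i; rewrite inord_val.
Qed.

Lemma adj_mul n e (v : 'rV[R]_n) (g : nat -> R) (j : 'I_n) : (forall i : 'I_n, v 0 i = g i) ->
  (v *m adjmx R n e) 0 j = \sum_(0 <= i < n) g i * (e i j || e j i)%:R.
Proof. by move=> hg; rewrite !mxE big_mkord; apply: eq_bigr => i _; rewrite hg mxE. Qed.

Lemma eig_cols n e (v : 'rV[R]_n) (g : nat -> R) nu : (forall i : 'I_n, v 0 i = g i) ->
  v *m adjmx R n e = nu *: v ->
  forall j, (j < n)%N -> nu * g j = \sum_(0 <= i < n) g i * (e i j || e j i)%:R.
Proof.
move=> hg hv j hj; have := congr1 (fun M : 'rV[R]_n => M 0 (Ordinal hj)) hv.
by rewrite (@adj_mul _ e v g (Ordinal hj) hg) mxE hg => <-.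
Qed.

Lemma mid_true lo hi (g : nat -> R) (b : nat -> bool) :
  (forall i, (lo <= i < hi)%N -> b i = true) ->
  \sum_(lo <= i < hi) g i * (b i)%:R = \sum_(lo <= i < hi) g i.
Proof. by move=> h; apply: eq_big_nat => i /h ->; rewrite mulr1. Qed.

Lemma mid_false lo hi (g : nat -> R) (b : nat -> bool) :
  (forall i, (lo <= i < hi)%N -> b i = false) ->
  \sum_(lo <= i < hi) g i * (b i)%:R = 0.
Proof. by move=> h; rewrite big1_seq // => i; rewrite mem_index_iota => /h ->; rewrite mulr0. Qed.

Lemma sum_const_nat lo hi (g : nat -> R) c :
  (forall i, (lo <= i < hi)%N -> g i = c) ->
  \sum_(lo <= i < hi) g i = (hi - lo)%:R * c.
Proof. by move=> h; rewrite (eq_big_nat _ _ h) sumr_const_nat mulr_natl. Qed.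

Lemma sumL k (f : nat -> R) : \sum_(0 <= i < k+6) f i =
  f 0%N + f 1%N + f 2%N + f 3%N + f 4%N + \sum_(5 <= i < 5+k) f i + f (5+k)%N.
Proof.
rewrite (_ : (k+6 = (5+k).+1)%N); last by lia.
rewrite big_nat_recr //= (big_cat_nat _ (n:=5)) //= ?leq_addr //.
have -> : \sum_(0 <= i < 5) f i = f 0%N + f 1%N + f 2%N + f 3%N + f 4%N.
  by rewrite !big_nat_recl // big_geq // addr0 !addrA.
by [].
Qed.

Lemma sumT a (f : nat -> R) : \sum_(0 <= i < a+5) f i =
  \sum_(0 <= i < a) f i + f a + f (a+1)%N + f (a+2)%N + f (a+3)%N + f (a+4)%N.
Proof.
rewrite (_ : (a+5 = (a+4).+1)%N); last by lia.
rewrite big_nat_recr //=; congr (_ + _).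
rewrite (_ : (a+4 = (a+3).+1)%N); last by lia.
rewrite big_nat_recr /= ?leq_addr //; congr (_ + _).
rewrite (_ : (a+3 = (a+2).+1)%N); last by lia.
rewrite big_nat_recr /= ?leq_addr //; congr (_ + _).
rewrite (_ : (a+2 = (a+1).+1)%N); last by lia.
rewrite big_nat_recr /= ?leq_addr //; congr (_ + _).
rewrite (_ : (a+1 = a.+1)%N); last by lia.
by rewrite big_nat_recr /= ?leq_addr.
Qed.

End Gen.
Arguments rv_fun {R n}.
Arguments eig_cols {R n e v g nu}.
Arguments mid_true {R lo hi g b}.
Arguments mid_false {R lo hi g b}.
Arguments sum_const_nat {R lo hi g c}.
Arguments sumL {R}.
Arguments sumT {R}.

Ltac bvalL := repeat match goal with
 | |- context [ (L_edge ?k ?i ?j || L_edge ?k ?j ?i) ] =>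
     first [ rewrite (_ : (L_edge k i j || L_edge k j i) = true); last by rewrite /L_edge; lia
           | rewrite (_ : (L_edge k i j || L_edge k j i) = false); last by rewrite /L_edge; lia ]
 | |- context [ L_edge ?k ?i ?j ] =>
     first [ rewrite (_ : L_edge k i j = true); last by rewrite /L_edge; lia
           | rewrite (_ : L_edge k i j = false); last by rewrite /L_edge; lia ]
 end.

Section L.
Variable R : fieldType.
Definition colL k (g : nat -> R) j := \sum_(0 <= i < k+6) g i * (L_edge k i j || L_edge k j i)%:R.

Ltac colt := rewrite /colL sumL /=; bvalL;
  first [ rewrite mid_true; last by move=> i hi; rewrite /L_edge; lia
        | rewrite mid_false; last by move=> i hi; rewrite /L_edge; lia ];
  bvalL; rewrite /=; ring.

Lemma colL0 k g : colL k g 0 = g 1%N + g 4%N + \sum_(5 <= i < 5+k) g i + g (5+k)%N.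
Proof. colt. Qed.
Lemma colL1 k g : colL k g 1 = g 0%N + g 2%N.
Proof. colt. Qed.
Lemma colL2 k g : colL k g 2 = g 1%N + g 3%N + \sum_(5 <= i < 5+k) g i.
Proof. colt. Qed.
Lemma colL3 k g : colL k g 3 = g 2%N + g 4%N.
Proof. colt. Qed.
Lemma colL4 k g : colL k g 4 = g 0%N + g 3%N.
Proof. colt. Qed.
Lemma colLS k g j : (5 <= j < 5 + k)%N -> colL k g j = g 0%N + g 2%N.
Proof. move=> hj; colt. Qed.
Lemma colLp k g : colL k g (5+k) = g 0%N.
Proof. colt. Qed.
End L.
Section Alg.
Variable R : comRingType.
Definition pLf (K nu : R) := nu^+7 - (6%:R + 2%:R*K)*nu^+5 + (8%:R + 5%:R*K)*nu^+3 - (2%:R+2%:R*K)*nu^+2 - (1+K)*nu.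
Definition pTf (A nu : R) := nu^+5 - (4%:R + 3%:R*A)*nu^+3 + (2%:R + 7%:R*A)*nu - 4%:R*A.
Lemma L_alg (K nu x0 x1 x2 x3 x4 xS xp : R) :
  nu*x0 - (x1 + x4 + K*xS + xp) = 0 ->
  nu*x1 - (x0+x2) = 0 ->
  nu*x2 - (x1+x3+K*xS) = 0 ->
  nu*x3-(x2+x4) = 0 ->
  nu*x4-(x3+x0) = 0 ->
  nu*xS-(x0+x2) = 0 ->
  nu*xp-x0 = 0 ->
  pLf K nu * x0 = 0 /\ pLf K nu * x1 = 0 /\ pLf K nu * x2 = 0 /\ pLf K nu * x3 = 0 /\ pLf K nu * x4 = 0 /\ pLf K nu * xS = 0 /\ pLf K nu * xp = 0.
Proof.
move=> E0 E1 E2 E3 E4 E5 E6.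
repeat split.
- have -> : pLf K nu * x0 = (nu^+2 + nu^+2*K^+1 - 3%:R*nu^+4 - nu^+4*K^+1 + nu^+6)*(nu*x0 - (x1 + x4 + K*xS + xp)) + (nu^+2 - 2%:R*nu^+3 + nu^+5)*(nu*x1 - (x0+x2)) + (- nu^+2 - nu^+2*K^+1 + nu^+3 + nu^+4 + nu^+4*K^+1)*(nu*x2 - (x1+x3+K*xS)) + (- nu^+2 - nu^+2*K^+1 + nu^+3 + nu^+3*K^+1 + nu^+4)*(nu*x3-(x2+x4)) + (nu^+2 + nu^+2*K^+1 - 2%:R*nu^+3 - nu^+3*K^+1 + nu^+5)*(nu*x4-(x3+x0)) + (nu^+2*K^+1 - 2%:R*nu^+3*K^+1 + nu^+5*K^+1)*(nu*xS-(x0+x2)) + (nu^+1 + nu^+1*K^+1 - 3%:R*nu^+3 - nu^+3*K^+1 + nu^+5)*(nu*xp-x0) by rewrite /pLf; ring.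
  by rewrite E0 E1 E2 E3 E4 E5 E6 !mulr0 !addr0.
- have -> : pLf K nu * x1 = (nu^+2 - 2%:R*nu^+3 + nu^+5)*(nu*x0 - (x1 + x4 + K*xS + xp)) + (- K^+1 - 2%:R*nu^+1*K^+1 + 3%:R*nu^+2 + 5%:R*nu^+2*K^+1 - 4%:R*nu^+4 - 2%:R*nu^+4*K^+1 + nu^+6)*(nu*x1 - (x0+x2)) + (nu^+1 + nu^+2 - 3%:R*nu^+3 + nu^+5)*(nu*x2 - (x1+x3+K*xS)) + (- 2%:R*nu^+2 + nu^+3 + nu^+4)*(nu*x3-(x2+x4)) + (- nu^+1 - nu^+2 + nu^+3 + nu^+4)*(nu*x4-(x3+x0)) + (K^+1 + 2%:R*nu^+1*K^+1 - 5%:R*nu^+2*K^+1 + 2%:R*nu^+4*K^+1)*(nu*xS-(x0+x2)) + (nu^+1 - 2%:R*nu^+2 + nu^+4)*(nu*xp-x0) by rewrite /pLf; ring.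
  by rewrite E0 E1 E2 E3 E4 E5 E6 !mulr0 !addr0.
- have -> : pLf K nu * x2 = (- nu^+2 - nu^+2*K^+1 + nu^+3 + nu^+4 + nu^+4*K^+1)*(nu*x0 - (x1 + x4 + K*xS + xp)) + (nu^+1 + nu^+2 - 3%:R*nu^+3 + nu^+5)*(nu*x1 - (x0+x2)) + (2%:R*nu^+2 + nu^+2*K^+1 - 4%:R*nu^+4 - nu^+4*K^+1 + nu^+6)*(nu*x2 - (x1+x3+K*xS)) + (nu^+2 + nu^+2*K^+1 - 3%:R*nu^+3 - nu^+3*K^+1 + nu^+5)*(nu*x3-(x2+x4)) + (- 2%:R*nu^+2 - nu^+2*K^+1 + nu^+3 + nu^+3*K^+1 + nu^+4)*(nu*x4-(x3+x0)) + (nu^+1*K^+1 + nu^+2*K^+1 - 3%:R*nu^+3*K^+1 + nu^+5*K^+1)*(nu*xS-(x0+x2)) + (- nu^+1 - nu^+1*K^+1 + nu^+2 + nu^+3 + nu^+3*K^+1)*(nu*xp-x0) by rewrite /pLf; ring.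
  by rewrite E0 E1 E2 E3 E4 E5 E6 !mulr0 !addr0.
- have -> : pLf K nu * x3 = (- nu^+2 - nu^+2*K^+1 + nu^+3 + nu^+3*K^+1 + nu^+4)*(nu*x0 - (x1 + x4 + K*xS + xp)) + (- 2%:R*nu^+2 + nu^+3 + nu^+4)*(nu*x1 - (x0+x2)) + (nu^+2 + nu^+2*K^+1 - 3%:R*nu^+3 - nu^+3*K^+1 + nu^+5)*(nu*x2 - (x1+x3+K*xS)) + (2%:R*nu^+2 + 2%:R*nu^+2*K^+1 - 4%:R*nu^+4 - 2%:R*nu^+4*K^+1 + nu^+6)*(nu*x3-(x2+x4)) + (nu^+1 + nu^+1*K^+1 + nu^+2 + nu^+2*K^+1 - 3%:R*nu^+3 - 2%:R*nu^+3*K^+1 + nu^+5)*(nu*x4-(x3+x0)) + (- 2%:R*nu^+2*K^+1 + nu^+3*K^+1 + nu^+4*K^+1)*(nu*xS-(x0+x2)) + (- nu^+1 - nu^+1*K^+1 + nu^+2 + nu^+2*K^+1 + nu^+3)*(nu*xp-x0) by rewrite /pLf; ring.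
  by rewrite E0 E1 E2 E3 E4 E5 E6 !mulr0 !addr0.
- have -> : pLf K nu * x4 = (nu^+2 + nu^+2*K^+1 - 2%:R*nu^+3 - nu^+3*K^+1 + nu^+5)*(nu*x0 - (x1 + x4 + K*xS + xp)) + (- nu^+1 - nu^+2 + nu^+3 + nu^+4)*(nu*x1 - (x0+x2)) + (- 2%:R*nu^+2 - nu^+2*K^+1 + nu^+3 + nu^+3*K^+1 + nu^+4)*(nu*x2 - (x1+x3+K*xS)) + (nu^+1 + nu^+1*K^+1 + nu^+2 + nu^+2*K^+1 - 3%:R*nu^+3 - 2%:R*nu^+3*K^+1 + nu^+5)*(nu*x3-(x2+x4)) + (3%:R*nu^+2 + 2%:R*nu^+2*K^+1 - 4%:R*nu^+4 - 2%:R*nu^+4*K^+1 + nu^+6)*(nu*x4-(x3+x0)) + (- nu^+1*K^+1 - nu^+2*K^+1 + nu^+3*K^+1 + nu^+4*K^+1)*(nu*xS-(x0+x2)) + (nu^+1 + nu^+1*K^+1 - 2%:R*nu^+2 - nu^+2*K^+1 + nu^+4)*(nu*xp-x0) by rewrite /pLf; ring.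
  by rewrite E0 E1 E2 E3 E4 E5 E6 !mulr0 !addr0.
- have -> : pLf K nu * xS = (nu^+2 - 2%:R*nu^+3 + nu^+5)*(nu*x0 - (x1 + x4 + K*xS + xp)) + (1%:R + 2%:R*nu^+1 - 5%:R*nu^+2 + 2%:R*nu^+4)*(nu*x1 - (x0+x2)) + (nu^+1 + nu^+2 - 3%:R*nu^+3 + nu^+5)*(nu*x2 - (x1+x3+K*xS)) + (- 2%:R*nu^+2 + nu^+3 + nu^+4)*(nu*x3-(x2+x4)) + (- nu^+1 - nu^+2 + nu^+3 + nu^+4)*(nu*x4-(x3+x0)) + (- 1%:R - 2%:R*nu^+1 + 8%:R*nu^+2 - 6%:R*nu^+4 + nu^+6)*(nu*xS-(x0+x2)) + (nu^+1 - 2%:R*nu^+2 + nu^+4)*(nu*xp-x0) by rewrite /pLf; ring.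
  by rewrite E0 E1 E2 E3 E4 E5 E6 !mulr0 !addr0.
- have -> : pLf K nu * xp = (nu^+1 + nu^+1*K^+1 - 3%:R*nu^+3 - nu^+3*K^+1 + nu^+5)*(nu*x0 - (x1 + x4 + K*xS + xp)) + (nu^+1 - 2%:R*nu^+2 + nu^+4)*(nu*x1 - (x0+x2)) + (- nu^+1 - nu^+1*K^+1 + nu^+2 + nu^+3 + nu^+3*K^+1)*(nu*x2 - (x1+x3+K*xS)) + (- nu^+1 - nu^+1*K^+1 + nu^+2 + nu^+2*K^+1 + nu^+3)*(nu*x3-(x2+x4)) + (nu^+1 + nu^+1*K^+1 - 2%:R*nu^+2 - nu^+2*K^+1 + nu^+4)*(nu*x4-(x3+x0)) + (nu^+1*K^+1 - 2%:R*nu^+2*K^+1 + nu^+4*K^+1)*(nu*xS-(x0+x2)) + (- 2%:R*nu^+1 - 2%:R*nu^+1*K^+1 + 5%:R*nu^+2 + 4%:R*nu^+2*K^+1 - 5%:R*nu^+4 - 2%:R*nu^+4*K^+1 + nu^+6)*(nu*xp-x0) by rewrite /pLf; ring.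
  by rewrite E0 E1 E2 E3 E4 E5 E6 !mulr0 !addr0.
Qed.

Lemma T_alg (A nu xA xB x3 x4 x5 : R) :
  nu*xA-(2%:R*xB+x5) = 0 ->
  nu*xB-(A*xA+x3) = 0 ->
  nu*x3-(2%:R*xB+x4) = 0 ->
  nu*x4-(x3+x5) = 0 ->
  nu*x5-(x4+A*xA) = 0 ->
  pTf A nu * xA = 0 /\ pTf A nu * xB = 0 /\ pTf A nu * x3 = 0 /\ pTf A nu * x4 = 0 /\ pTf A nu * x5 = 0.
Proof.
move=> E0 E1 E2 E3 E4.
repeat split.
- have -> : pTf A nu * xA = (2%:R - 4%:R*nu^+2 + nu^+4)*(nu*xA-(2%:R*xB+x5)) + (2%:R - 4%:R*nu^+1 + 2%:R*nu^+3)*(nu*xB-(A*xA+x3)) + (- 2%:R + nu^+1 + 2%:R*nu^+2)*(nu*x3-(2%:R*xB+x4)) + (- 2%:R + 2%:R*nu^+1 + nu^+2)*(nu*x4-(x3+x5)) + (2%:R - 3%:R*nu^+1 + nu^+3)*(nu*x5-(x4+A*xA)) by rewrite /pTf; ring.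
  by rewrite E0 E1 E2 E3 E4 !mulr0 !addr0.
- have -> : pTf A nu * xB = (A^+1 - 2%:R*nu^+1*A^+1 + nu^+3*A^+1)*(nu*xA-(2%:R*xB+x5)) + (A^+1 - 2%:R*nu^+2 - nu^+2*A^+1 + nu^+4)*(nu*xB-(A*xA+x3)) + (A^+1 - nu^+1 - nu^+1*A^+1 + nu^+3)*(nu*x3-(2%:R*xB+x4)) + (- A^+1 + nu^+1*A^+1 + nu^+2)*(nu*x4-(x3+x5)) + (- A^+1 + nu^+1 + nu^+2*A^+1)*(nu*x5-(x4+A*xA)) by rewrite /pTf; ring.
  by rewrite E0 E1 E2 E3 E4 !mulr0 !addr0.
- have -> : pTf A nu * x3 = (- 2%:R*A^+1 + nu^+1*A^+1 + 2%:R*nu^+2*A^+1)*(nu*xA-(2%:R*xB+x5)) + (2%:R*A^+1 - 2%:R*nu^+1 - 2%:R*nu^+1*A^+1 + 2%:R*nu^+3)*(nu*xB-(A*xA+x3)) + (2%:R*A^+1 - nu^+2 - 3%:R*nu^+2*A^+1 + nu^+4)*(nu*x3-(2%:R*xB+x4)) + (2%:R*A^+1 - 3%:R*nu^+1*A^+1 + nu^+3)*(nu*x4-(x3+x5)) + (- 2%:R*A^+1 + 2%:R*nu^+1*A^+1 + nu^+2)*(nu*x5-(x4+A*xA)) by rewrite /pTf; ring.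
  by rewrite E0 E1 E2 E3 E4 !mulr0 !addr0.
- have -> : pTf A nu * x4 = (- 2%:R*A^+1 + 2%:R*nu^+1*A^+1 + nu^+2*A^+1)*(nu*xA-(2%:R*xB+x5)) + (- 2%:R*A^+1 + 2%:R*nu^+1*A^+1 + 2%:R*nu^+2)*(nu*xB-(A*xA+x3)) + (2%:R*A^+1 - 3%:R*nu^+1*A^+1 + nu^+3)*(nu*x3-(2%:R*xB+x4)) + (2%:R*A^+1 - 2%:R*nu^+2 - 3%:R*nu^+2*A^+1 + nu^+4)*(nu*x4-(x3+x5)) + (2%:R*A^+1 - 2%:R*nu^+1 - 2%:R*nu^+1*A^+1 + nu^+3)*(nu*x5-(x4+A*xA)) by rewrite /pTf; ring.
  by rewrite E0 E1 E2 E3 E4 !mulr0 !addr0.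
- have -> : pTf A nu * x5 = (2%:R*A^+1 - 3%:R*nu^+1*A^+1 + nu^+3*A^+1)*(nu*xA-(2%:R*xB+x5)) + (- 2%:R*A^+1 + 2%:R*nu^+1 + 2%:R*nu^+2*A^+1)*(nu*xB-(A*xA+x3)) + (- 2%:R*A^+1 + 2%:R*nu^+1*A^+1 + nu^+2)*(nu*x3-(2%:R*xB+x4)) + (2%:R*A^+1 - 2%:R*nu^+1 - 2%:R*nu^+1*A^+1 + nu^+3)*(nu*x4-(x3+x5)) + (2%:R*A^+1 - 3%:R*nu^+2 - 2%:R*nu^+2*A^+1 + nu^+4)*(nu*x5-(x4+A*xA)) by rewrite /pTf; ring.
  by rewrite E0 E1 E2 E3 E4 !mulr0 !addr0.
Qed.

End Alg.

Section LE.
Variable R : fieldType.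

Lemma L_eig k nu : eigenvalue (adjmx R (k+6) (L_edge k)) nu -> nu != 0 -> pLf R k%:R nu = 0.
Proof.
move=> /eigenvalueP [v hv vn0] nu0.
have [g hg] := rv_fun v.
have hc := eig_cols hg hv.
set xS := (g 0%N + g 2%N) / nu.
have hS : forall j, (5 <= j < 5+k)%N -> g j = xS.
  move=> j hj; have := hc j ltac:(lia); rewrite -/(colL R k g j) colLS // => h.
  by rewrite /xS -h mulrAC divff // mul1r.
have sS : \sum_(5 <= i < 5+k) g i = k%:R * xS by rewrite (sum_const_nat hS) addKn.
have E0 : nu * g 0%N - (g 1%N + g 4%N + k%:R * xS + g (5+k)%N) = 0.
  by rewrite (hc 0%N ltac:(lia)) -/(colL R k g 0) colL0 sS subrr.
have E1 : nu * g 1%N - (g 0%N + g 2%N) = 0.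
  by rewrite (hc 1%N ltac:(lia)) -/(colL R k g 1) colL1 subrr.
have E2 : nu * g 2%N - (g 1%N + g 3%N + k%:R * xS) = 0.
  by rewrite (hc 2%N ltac:(lia)) -/(colL R k g 2) colL2 sS subrr.
have E3 : nu * g 3%N - (g 2%N + g 4%N) = 0.
  by rewrite (hc 3%N ltac:(lia)) -/(colL R k g 3) colL3 subrr.
have E4 : nu * g 4%N - (g 3%N + g 0%N) = 0.
  by rewrite (hc 4%N ltac:(lia)) -/(colL R k g 4) colL4 [g 3%N + _]addrC subrr.
have E5 : nu * xS - (g 0%N + g 2%N) = 0.
  by rewrite /xS mulrC divfK // subrr.
have E6 : nu * g (5+k)%N - g 0%N = 0.
  by rewrite (hc (5+k)%N ltac:(lia)) -/(colL R k g (5+k)) colLp subrr.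
have [h0 [h1 [h2 [h3 [h4 [h5 h6]]]]]] := @L_alg R _ _ _ _ _ _ _ _ _ E0 E1 E2 E3 E4 E5 E6.
case: (eqVneq (pLf R k%:R nu) 0) => // hp.
have z : forall x : R, pLf R k%:R nu * x = 0 -> x = 0.
  by move=> x /eqP; rewrite mulf_eq0 (negbTE hp) => /eqP.
case/eqP: vn0; apply/rowP => j; rewrite !mxE hg.
have := ltn_ord j; move: (nat_of_ord j) => n hn.
have [hn5|hn5] := ltnP n 5.
  by case: n hn hn5 => [|[|[|[|[|n]]]]] //= _ _; apply: z.
have [hnk|hnk] := ltnP n (5+k).
  by rewrite hS ?hn5 //; apply: z.
have -> : n = (5+k)%N by lia.
exact: z.
Qed.
End LE.

Ltac bvalT := repeat match goal with
 | |- context [ (T_edge ?k ?i ?j || T_edge ?k ?j ?i) ] =>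
     first [ rewrite (_ : (T_edge k i j || T_edge k j i) = true); last by rewrite /T_edge; lia
           | rewrite (_ : (T_edge k i j || T_edge k j i) = false); last by rewrite /T_edge; lia ]
 | |- context [ T_edge ?k ?i ?j ] =>
     first [ rewrite (_ : T_edge k i j = true); last by rewrite /T_edge; lia
           | rewrite (_ : T_edge k i j = false); last by rewrite /T_edge; lia ]
 end.

Section TC.
Variable R : fieldType.
Definition colT a (g : nat -> R) j := \sum_(0 <= i < a+5) g i * (T_edge a i j || T_edge a j i)%:R.
Ltac colt := rewrite /colT sumT /=; bvalT;
  first [ rewrite mid_true; last by move=> i hi; rewrite /T_edge; lia
        | rewrite mid_false; last by move=> i hi; rewrite /T_edge; lia ];
  bvalT; rewrite /=; ring.
Lemma colTA a g j : (j < a)%N -> colT a g j = g a + g (a+1)%N + g (a+4)%N.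
Proof. move=> hj; colt. Qed.
Lemma colTB0 a g : colT a g a = \sum_(0 <= i < a) g i + g (a+2)%N.
Proof. colt. Qed.
Lemma colTB1 a g : colT a g (a+1) = \sum_(0 <= i < a) g i + g (a+2)%N.
Proof. colt. Qed.
Lemma colT3 a g : colT a g (a+2) = g a + g (a+1)%N + g (a+3)%N.
Proof. colt. Qed.
Lemma colT4 a g : colT a g (a+3) = g (a+2)%N + g (a+4)%N.
Proof. colt. Qed.
Lemma colT5 a g : colT a g (a+4) = \sum_(0 <= i < a) g i + g (a+3)%N.
Proof. colt. Qed.
End TC.

Section TE.
Variable R : fieldType.

Lemma T_eig a nu : eigenvalue (adjmx R (a+5) (T_edge a)) nu -> nu != 0 -> pTf R a%:R nu = 0.
Proof.
move=> /eigenvalueP [v hv vn0] nu0.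
have [g hg] := rv_fun v.
have hc := eig_cols hg hv.
set xA := (g a + g (a+1)%N + g (a+4)%N) / nu.
have hA : forall j, (0 <= j < a)%N -> g j = xA.
  move=> j hj; have := hc j ltac:(lia); rewrite -/(colT R a g j) colTA ?(andP hj).2 // => h.
  by rewrite /xA -h mulrAC divff // mul1r.
have sA : \sum_(0 <= i < a) g i = a%:R * xA by rewrite (sum_const_nat hA) subn0.
have hB0 := hc a ltac:(lia); rewrite -/(colT R a g a) colTB0 sA in hB0.
have hB1 := hc (a+1)%N ltac:(lia); rewrite -/(colT R a g (a+1)) colTB1 sA in hB1.
have eB : g (a+1)%N = g a by apply: (mulfI nu0); rewrite hB0 hB1.
have E0 : nu * xA - (2%:R * g a + g (a+4)%N) = 0.
  by rewrite /xA mulrC divfK // eB; apply/eqP; rewrite subr_eq0; apply/eqP; ring.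
have E1 : nu * g a - (a%:R * xA + g (a+2)%N) = 0 by rewrite hB0 subrr.
have E2 : nu * g (a+2)%N - (2%:R * g a + g (a+3)%N) = 0.
  rewrite (hc (a+2)%N ltac:(lia)) -/(colT R a g (a+2)) colT3 eB.
  by apply/eqP; rewrite subr_eq0; apply/eqP; ring.
have E3 : nu * g (a+3)%N - (g (a+2)%N + g (a+4)%N) = 0.
  by rewrite (hc (a+3)%N ltac:(lia)) -/(colT R a g (a+3)) colT4 subrr.
have E4 : nu * g (a+4)%N - (g (a+3)%N + a%:R * xA) = 0.
  by rewrite (hc (a+4)%N ltac:(lia)) -/(colT R a g (a+4)) colT5 sA [g (a+3)%N + _]addrC subrr.
have [h0 [h1 [h2 [h3 h4]]]] := @T_alg R _ _ _ _ _ _ _ E0 E1 E2 E3 E4.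
case: (eqVneq (pTf R a%:R nu) 0) => // hp.
have z : forall x : R, pTf R a%:R nu * x = 0 -> x = 0.
  by move=> x /eqP; rewrite mulf_eq0 (negbTE hp) => /eqP.
case/eqP: vn0; apply/rowP => j; rewrite !mxE hg.
have := ltn_ord j; move: (nat_of_ord j) => n hn.
have [hna|hna] := ltnP n a; first by rewrite hA ?hna //; apply: z.
have [->|] := eqVneq n a; first by apply: z.
move=> hna'.
have [->|] := eqVneq n (a+1)%N; first by rewrite eB; apply: z.
move=> hna1.
have [->|] := eqVneq n (a+2)%N; first by apply: z.
move=> hna2.
have [->|] := eqVneq n (a+3)%N; first by apply: z.
move=> hna3.
have -> : n = (a+4)%N by lia.
by apply: z.
Qed.
End TE.

Ltac gv g := rewrite /g; repeat (case: ifP => ?); first [done | exfalso; lia].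

Section TL.
Variable R : fieldType.

Lemma T_lift_gen a nu (xA xB x3 x4 x5 : R) : xB != 0 ->
  nu * xA = 2%:R * xB + x5 -> nu * xB = a%:R * xA + x3 -> nu * x3 = 2%:R * xB + x4 ->
  nu * x4 = x3 + x5 -> nu * x5 = x4 + a%:R * xA ->
  eigenvalue (adjmx R (a+5) (T_edge a)) nu.
Proof.
move=> xB0 e1 e2 e3 e4 e5.
pose g := fun i : nat => if (i < a)%N then xA else if (i < a+2)%N then xB
   else if i == (a+2)%N then x3 else if i == (a+3)%N then x4 else x5.
have gA : forall i, (0 <= i < a)%N -> g i = xA by move=> i /andP[_ hi]; rewrite /g hi.
have gB0 : g a = xB by gv g.
have gB1 : g (a+1)%N = xB by gv g.
have g3 : g (a+2)%N = x3 by gv g.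
have g4 : g (a+3)%N = x4 by gv g.
have g5 : g (a+4)%N = x5 by gv g.
have sA : \sum_(0 <= i < a) g i = a%:R * xA by rewrite (sum_const_nat gA) subn0.
pose v := \row_(i < a+5) g i.
have hg : forall i : 'I_(a+5), v 0 i = g i by move=> i; rewrite mxE.
apply/eigenvalueP; exists v; last first.
  have ha : (a < a+5)%N by lia.
  apply/eqP => /rowP /(_ (Ordinal ha)); rewrite hg mxE /= gB0 => h.
  by rewrite h eqxx in xB0.
apply/rowP => j; rewrite (@adj_mul R _ (T_edge a) v g j hg) mxE hg.
rewrite -/(colT R a g j).
have := ltn_ord j; move: (nat_of_ord j) => n hn.
have [hna|hna] := ltnP n a.
  by rewrite colTA // (gA n) ?hna // gB0 gB1 g5 e1; ring.
have [->|] := eqVneq n a; first by rewrite colTB0 sA g3 gB0 e2.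
move=> hna'.
have [->|] := eqVneq n (a+1)%N; first by rewrite colTB1 sA g3 gB1 e2.
move=> hna1.
have [->|] := eqVneq n (a+2)%N; first by rewrite colT3 gB0 gB1 g4 g3 e3; ring.
move=> hna2.
have [->|] := eqVneq n (a+3)%N; first by rewrite colT4 g3 g5 g4 e4.
move=> hna3.
have -> : n = (a+4)%N by lia.
by rewrite colT5 sA g4 g5 e5 addrC.
Qed.
End TL.

Section Fin.
Variable R : rcfType.

Lemma seq_max (s : seq R) : s != [::] -> exists2 m, m \in s & forall y, y \in s -> y <= m.
Proof.
elim: s => // x s IH _.
have [->|sn] := eqVneq s [::].
  by exists x; rewrite ?mem_head // => y; rewrite inE => /eqP ->.
have [m ms hm] := IH sn.
have [xm|mx] := leP x m.
  exists m; first by rewrite inE ms orbT.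
  by move=> y; rewrite inE => /orP[/eqP ->|/hm].
exists x; first by rewrite mem_head.
move=> y; rewrite inE => /orP[/eqP ->//|/hm ym]; exact: (le_trans ym (ltW mx)).
Qed.

Lemma exists_largest n (A : 'M[R]_n) nu0 : eigenvalue A nu0 -> exists mu, largest_eigenvalue A mu.
Proof.
move=> h0.
have pn0 : char_poly A != 0 by apply: monic_neq0; exact: char_poly_monic.
have hs := roots_on_rootsR pn0.
have mem : forall x, eigenvalue A x = (x \in rootsR (char_poly A)).
  by move=> x; rewrite -hs eigenvalue_root_char.
have [m ms hm] : exists2 m, m \in rootsR (char_poly A) & forall y, y \in rootsR (char_poly A) -> y <= m.
  apply: seq_max; apply/eqP => e; move: h0; rewrite mem e.
  done.
exists m; split; first by rewrite mem.
by move=> nu; rewrite mem => /hm.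
Qed.

Lemma T_lift a nu : 1 < nu -> pTf R a%:R nu = 0 -> eigenvalue (adjmx R (a+5) (T_edge a)) nu.
Proof.
move=> nu1 hp.
have A0 : 0 <= a%:R :> R by rewrite ler0n.
apply: (@T_lift_gen R a nu (nu^+2 + 2%:R * nu - 2%:R) (nu^+2 + a%:R * nu - a%:R)
   (nu * (nu^+2 + a%:R * nu - a%:R) - a%:R * (nu^+2 + 2%:R * nu - 2%:R))
   (nu * (nu * (nu^+2 + a%:R * nu - a%:R) - a%:R * (nu^+2 + 2%:R * nu - 2%:R)) - 2%:R * (nu^+2 + a%:R * nu - a%:R))
   (nu * (nu^+2 + 2%:R * nu - 2%:R) - 2%:R * (nu^+2 + a%:R * nu - a%:R))).
- rewrite gt_eqF //. nra.
- ring.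
- ring.
- ring.
- apply/eqP; rewrite -subr_eq0; apply/eqP; rewrite -hp /pTf; ring.
- ring.
Qed.

End Fin.

Section Fin2.
Variable R : rcfType.

Lemma L_zero k : (2 <= k)%N -> eigenvalue (adjmx R (k+6) (L_edge k)) 0.
Proof.
move=> hk; have h5 : (5 < k+6)%N by lia. have h6 : (6 < k+6)%N by lia.
apply/eigenvalueP; exists (delta_mx 0 (Ordinal h5) - delta_mx 0 (Ordinal h6)).
  rewrite scale0r mulmxBl -!rowE; apply/eqP; rewrite subr_eq0; apply/eqP/rowP => j.
  rewrite !mxE /=; congr (_%:R); congr (nat_of_bool _).
  rewrite /L_edge; lia.
apply/eqP => /rowP /(_ (Ordinal h5)); rewrite !mxE /=.
by move/eqP; rewrite subr0 oner_eq0.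
Qed.

Lemma pT_pos (A y : R) : 0 <= A -> A + 4%:R <= y -> 0 < pTf R A y.
Proof.
move=> A0 hy.
have y4 : 4%:R <= y by lra.
have y0 : 0 < y by lra.
have q : 12%:R <= y^+2 - (4%:R + 3%:R * A) by nra.
have y3 : 0 < y^+3 by rewrite exprn_gt0.
have e : pTf R A y = y^+3 * (y^+2 - (4%:R + 3%:R * A)) + ((2%:R + 7%:R * A) * y - 4%:R * A).
  by rewrite /pTf; ring.
rewrite e; have : 0 <= (2%:R + 7%:R * A) * y - 4%:R * A by nra.
have : 0 < y^+3 * (y^+2 - (4%:R + 3%:R * A)) by apply: mulr_gt0 => //; lra.
lra.
Qed.

End Fin2.

Section Fin3.
Variable R : rcfType.

Lemma main_cmp s : (1 <= s)%N -> exists muL muT : R,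
  [/\ largest_eigenvalue (adjmx R ((3*s-1)+6) (L_edge (3*s-1))) muL,
      largest_eigenvalue (adjmx R ((2*s)+5) (T_edge (2*s))) muT & muL < muT].
Proof.
move=> s1.
set k := (3*s-1)%N; set a := (2*s)%N.
have K : k%:R = 3%:R * s%:R - 1 :> R by rewrite /k natrB ?natrM //; lia.
have Aa : a%:R = 2%:R * s%:R :> R by rewrite /a natrM.
have S1 : 1 <= s%:R :> R by rewrite ler1n.
have A0 : 0 <= a%:R :> R by rewrite ler0n.
pose P : {poly R} := 'X^5 - (4%:R + 3%:R * a%:R)%:P * 'X^3 + (2%:R + 7%:R * a%:R)%:P * 'X - (4%:R * a%:R)%:P.
have HP : forall x, P.[x] = pTf R a%:R x.
  by move=> x; rewrite /P !(hornerD, hornerN, hornerCM, hornerC, hornerX, hornerXn) /pTf.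
have P1 : pTf R a%:R 1 = -1 by rewrite /pTf; ring.
have [r r1 rr] : exists2 r, 1 <= r <= a%:R + 4%:R & root P r.
  apply: Num.Theory.poly_ivt; first lra.
  rewrite !HP P1; apply/andP; split; first lra.
  by apply: ltW; apply: pT_pos => //.
have rr' : pTf R a%:R r = 0 by rewrite -HP; apply/eqP.
have r1' : 1 < r.
  rewrite lt_neqAle (andP r1).1 andbT; apply/eqP => e; move: rr'; rewrite -e P1.
  by move/eqP; rewrite oppr_eq0 oner_eq0.
have eT := @T_lift R _ _ r1' rr'.
have [muT [hT1 hT2]] := @exists_largest R _ _ _ eT.
have muT1 : 1 < muT := lt_le_trans r1' (hT2 r eT).
have pmuT : pTf R a%:R muT = 0.
  by apply: (@T_eig R _ _ hT1); rewrite gt_eqF //; lra.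
have nonneg : forall x, muT <= x -> 0 <= pTf R a%:R x.
  move=> x hx; have [->|xne] := eqVneq x muT; first by rewrite pmuT.
  have hx' : muT < x by rewrite lt_neqAle eq_sym xne hx.
  rewrite leNgt; apply/negP => neg.
  have [hxa|hxa] := leP (a%:R + 4%:R) x.
    by move: (@pT_pos R _ _ A0 hxa); lra.
  have [r2 r2i r2r] : exists2 r2, x <= r2 <= a%:R + 4%:R & root P r2.
    apply: Num.Theory.poly_ivt; first lra.
    rewrite !HP; apply/andP; split; first lra.
    by apply: ltW; apply: pT_pos => //.
  have r2' : pTf R a%:R r2 = 0 by rewrite -HP; apply/eqP.
  have e2 := @T_lift R _ _ (_ : 1 < r2) r2'.
  have := hT2 r2 (e2 ltac:(case/andP: r2i => ? ?; lra)).
  case/andP: r2i => ? ?; lra.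
have eL : eigenvalue (adjmx R (k+6) (L_edge k)) 0 by apply: (@L_zero R); lia.
have [muL [hL1 hL2]] := @exists_largest R _ _ _ eL.
exists muL, muT; split => //.
rewrite ltNge; apply/negP => hle.
have muL1 : 1 < muL by lra.
have pl := @L_eig R _ _ hL1 (_ : muL != 0).
have pt := nonneg muL hle.
have ide : pLf R k%:R muL = muL * (muL * pTf R a%:R muL + ((1 + s%:R) * muL^+2 + 2%:R * s%:R * muL - 3%:R * s%:R)).
  by rewrite /pLf /pTf K Aa; ring.
have pl' := pl ltac:(rewrite gt_eqF //; lra).
rewrite ide in pl'.
have : 0 < muL * (muL * pTf R a%:R muL + ((1 + s%:R) * muL^+2 + 2%:R * s%:R * muL - 3%:R * s%:R)).
  apply: mulr_gt0; first lra.
  have : 0 <= muL * pTf R a%:R muL by apply: mulr_ge0 => //; lra.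
  have : 1 <= muL^+2 by nra.
  nra.
by rewrite pl'; rewrite ltxx.
Qed.
End Fin3.

Theorem lemma2p3 (R : rcfType) (m : nat) :
  (10 <= m)%N -> ~~ odd m -> (exists t : nat, (0 < t)%N /\ m = (3 * t + 1)%N) ->
  exists muL muT : R,
    [/\ largest_eigenvalue (L_adj R m) muL,
        largest_eigenvalue (T_adj R m) muT & muL < muT].
Proof.
move=> hm ev [t [t0 ht]].
have tod : odd t by move: ev; rewrite ht oddD oddM /= addbT negbK.
have := divn_eq t 2; rewrite modn2 tod /= => et.
set s := (t %/ 2)%N in et.
have s1 : (1 <= s)%N by lia.
have ha : ((m - 4) %/ 3)%N = (2*s)%N by lia.
have hk : (m./2 - 3)%N = (3*s - 1)%N by rewrite -divn2; lia.
rewrite /L_adj /T_adj /L_nv /T_nv ha hk.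
exact: main_cmp.
Qed.
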